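(* Let $k$ be a positive integer. Let $I_1,\dots,I_n\subset\mathbb{R}$ be segments of lengths $\ell_1,\dots,\ell_n>0$ with midpoints $c_1,\dots,c_n$. Assume that every point of $\mathbb{R}$ belongs to at most $k$ of the interiors of $I_1,\dots,I_n$. Let $c=\frac{\sum_i\ell_ic_i}{\sum_i\ell_i}$, and let $I$ be the segment of length $\frac1k\sum_i\ell_i$ with midpoint $c$. Then $I\subset\operatorname{conv}\bigcup_i I_i$. *)

(* Defs.v *)
From HB Require Import structures.
From mathcomp Require Import all_boot all_order all_algebra.
Set Implicit Arguments. Unset Strict Implicit. Unset Printing Implicit Defensive.
Import Order.TTheory GRing.Theory Num.Theory.
Local Open Scope ring_scope.

Definition seg (R : realFieldType) (m len : R) (x : R) : bool :=
  (m - len / 2 <= x) && (x <= m + len / 2).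

Definition seg_int (R : realFieldType) (m len : R) (x : R) : bool :=
  (m - len / 2 < x) && (x < m + len / 2).

Definition convex_set (R : realFieldType) (C : R -> Prop) : Prop :=
  forall x y t : R, C x -> C y -> 0 <= t -> t <= 1 -> C (t * x + (1 - t) * y).

Definition conv (R : realFieldType) (S : R -> Prop) (x : R) : Prop :=
  forall C : R -> Prop, convex_set C -> (forall y, S y -> C y) -> C x.

(* Main.v *)
Require Import Defs.
From HB Require Import structures.
From mathcomp Require Import all_boot all_order all_algebra.
From mathcomp Require Import ring lra.
Import Order.TTheory GRing.Theory Num.Theory.
Local Open Scope ring_scope.

Lemma ex_min (R : realFieldType) (I : finType) (P : pred I) (F : I -> R) i0 :
  P i0 -> exists2 i, P i & forall j, P j -> F i <= F j.
Proof. move=> h; case: (arg_minP F h) => i Pi H; by exists i. Qed.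

Lemma ex_max (R : realFieldType) (I : finType) (P : pred I) (F : I -> R) i0 :
  P i0 -> exists2 i, P i & forall j, P j -> F j <= F i.
Proof. move=> h; case: (arg_maxP F h) => i Pi H; by exists i. Qed.

Lemma G (R : realFieldType) (k n : nat) (b : R) : (0 < k)%N ->
  forall (m : nat) (a r : 'I_n -> R),
  (#|[set i | (a i < r i)%R]| <= m)%N ->
  (forall i, a i <= r i) -> (forall i, r i <= b) ->
  (forall x, #|[set i | ((a i < x) && (x < r i))%R]| <= k)%N ->
  (forall s, s <= b -> (forall i, a i < r i -> s <= a i) ->
      \sum_i (r i - a i) <= k%:R * (b - s)) /\
  (\sum_i (r i - a i))^+2 <= k%:R * \sum_i ((b - a i)^+2 - (b - r i)^+2).
Proof.
move=> k0; elim=> [|m IH] a r hm har hrb hply.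
  have E i : a i = r i.
    apply/eqP; rewrite eq_le har /=; rewrite leNgt; apply/negP => h.
    move: hm; rewrite leqn0 => /eqP/cards0_eq/setP/(_ i).
    by rewrite inE h inE.
  have -> : \sum_i (r i - a i) = 0 by apply: big1 => i _; rewrite E subrr.
  have -> : \sum_i ((b - a i)^+2 - (b - r i)^+2) = 0.
    by apply: big1 => i _; rewrite E subrr.
  split; last by rewrite expr0n /= mulr0.
  move=> s sb _; apply: mulr_ge0 => //; lra.
have [/eqP S0|/set0Pn [j0 Hj0]] := boolP ([set i | (a i < r i)%R] == set0).
  by apply: IH => //; rewrite S0 cards0.
have Hj0' : (a j0 < r j0)%R by move: Hj0; rewrite inE.
have [j Hj jmin] := @ex_min R _ (fun i => (a i < r i)%R) r j0 Hj0'.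
set p := r j.
have hdeg i : ~~ (a i < r i) -> a i = r i.
  by move=> h; apply/eqP; rewrite eq_le har /= leNgt.
have hp i : a i < r i -> p <= r i by apply: jmin.
have pb : p <= b by apply: hrb.
have apj : a j < p by [].
set A := [set i | (a i < r i) && (a i < p)].
have cardA : (#|A| <= k)%N.
  have [/eqP ->|/set0Pn [i0 Hi0]] := boolP (A == set0); first by rewrite cards0.
  have [i1 Hi1 i1max] := @ex_max R _ (fun i => i \in A) a i0 Hi0.
  move: (Hi1); rewrite inE => /andP [_ hi1].
  apply: leq_trans (hply ((a i1 + p) / 2)).
  apply: subset_leq_card; apply/subsetP => i iA.
  have := i1max i iA; move: iA; rewrite !inE => /andP [h1 h2] h3.
  have := hp i h1 => h4.
  apply/andP; split; lra.
pose a' i := if a i < p then p else a i.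
pose r' i := if r i < p then p else r i.
pose d i := if i \in A then p - a i else 0.
pose ind i : R := if i \in A then 1 else 0.
have cases i :
  [/\ i \in A, a' i = p, r' i = r i & d i = p - a i] \/
  [/\ i \notin A, a' i = a i, r' i = r i, d i = 0 & p <= a i] \/
  [/\ i \notin A, a i = r i, a' i = r' i & d i = 0].
  rewrite /a' /r' /d.
  have [nd|dg] := boolP (a i < r i).
    have := hp i nd => pr.
    have -> : (r i < p) = false by apply/negbTE; rewrite -leNgt.
    have [ap|pa] := ltP (a i) p.
      have iA : i \in A by rewrite inE nd ap.
      by left; split; rewrite ?iA ?ap.
      have iA : i \notin A by rewrite inE nd /= ltNge pa.
      by right; left; split; rewrite ?(negbTE iA) // ltNge pa.
  right; right; have e := hdeg i dg.
  have iA : i \notin A by rewrite inE (negbTE dg).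
  by rewrite e (negbTE iA).
have [M' C'] : (forall s, s <= b -> (forall i, a' i < r' i -> s <= a' i) ->
      \sum_i (r' i - a' i) <= k%:R * (b - s)) /\
  (\sum_i (r' i - a' i))^+2 <= k%:R * \sum_i ((b - a' i)^+2 - (b - r' i)^+2).
  apply: IH.
  - have sub : [set i | (a' i < r' i)%R] \subset [set i | (a i < r i)%R] :\ j.
      have hj' : ~~ (a' j < r' j) by rewrite /a' /r' apj ltxx ltxx.
      apply/subsetP => i; rewrite !inE => h; apply/andP; split.
        by apply/negP => /eqP E; move: h; rewrite E (negbTE hj').
      case: (cases i) => [[iA _ _ _]|[[? e1 e2 _ _]|[? e1 e2 _]]].
      + by move: iA; rewrite inE => /andP [].
      + by rewrite -e1 -e2.
      + by move: h; rewrite e2 ltxx.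
    apply: leq_trans (subset_leq_card sub) _.
    by move: hm; rewrite (cardsD1 j) inE Hj.
  - move=> i; case: (cases i) => [[iA -> -> _]|[[? -> -> _ _]|[? _ -> _]]] //.
    by apply: hp; move: iA; rewrite inE => /andP [].

  - by move=> i; rewrite /r'; case: ifP.
  - move=> x; apply: leq_trans (hply x); apply: subset_leq_card.
    apply/subsetP => i; rewrite !inE => /andP [h1 h2].
    case: (cases i) => [[iA e1 e2 _]|[[? e1 e2 _ _]|[? e1 e2 _]]].
    + move: iA; rewrite inE e1 e2 in h1 h2 * => /andP [_ ?].
      by rewrite h2 andbT; lra.
    + by rewrite -e1 -e2 h1 h2.
    + by move: h1 h2; rewrite e2; lra.
have T1 i : r i - a i = (r' i - a' i) + d i.
  case: (cases i) => [[? -> -> ->]|[[? -> -> -> _]|[? -> -> ->]]]; ring.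
have T2 i : (b - a i)^+2 - (b - r i)^+2 =
   ((b - a' i)^+2 - (b - r' i)^+2) + 2 * d i * (b - p) + d i ^+ 2.
  case: (cases i) => [[? -> -> ->]|[[? -> -> -> _]|[? -> -> ->]]]; ring.
have dge i : 0 <= d i.
  case: (cases i) => [[iA _ _ ->]|[[? _ _ -> _]|[? _ _ ->]]] //.
  by move: iA; rewrite inE => /andP [_ ?]; lra.
have sumind : \sum_i ind i = #|A|%:R.
  by rewrite /ind -big_mkcond /= sumr_const.
have hK : 0 < k%:R :> R by rewrite ltr0n.
have KA : #|A|%:R <= k%:R :> R by rewrite ler_nat.
set L' := \sum_i (r' i - a' i).
set D := \sum_i d i.
have LE : \sum_i (r i - a i) = L' + D.
  by rewrite -big_split /=; apply: eq_bigr => i _; rewrite T1.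
have D0 : 0 <= D by apply: sumr_ge0 => i _; apply: dge.
have M'p : L' <= k%:R * (b - p).
  apply: M' => // i; case: (cases i) => [[? -> _ _]|[[? -> -> _ h]|[? _ -> _]]] //.
  by rewrite ltxx.
split.
  move=> s sb hs.
  have ps : s <= p by have := hs j Hj; lra.
  have Dle : D <= k%:R * (p - s).
    apply: (@le_trans _ _ (\sum_i (p - s) * ind i)).
      apply: ler_sum => i _; rewrite /ind.
      case: (cases i) => [[iA _ _ ->]|[[iA _ _ -> _]|[iA _ _ ->]]].
      + have nd : a i < r i by move: iA; rewrite inE => /andP [].
        by rewrite iA mulr1; have := hs i nd; lra.
      + by rewrite (negbTE iA) mulr0.
      + by rewrite (negbTE iA) mulr0.
    rewrite -mulr_sumr sumind mulrC; apply: ler_wpM2r => //; lra.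
  rewrite LE; lra.
set Q := \sum_i d i ^+ 2.
have CS : D ^+ 2 <= k%:R * Q.
  have H1 : \sum_i (2 * k%:R * d i * D - ind i * D ^+ 2) <= \sum_i (k%:R ^+ 2 * d i ^+ 2).
    apply: ler_sum => i _; rewrite /ind.
    case: (cases i) => [[iA _ _ ->]|[[iA _ _ -> _]|[iA _ _ ->]]].
    + rewrite iA; have := sqr_ge0 (k%:R * (p - a i) - D); lra.
    + by rewrite (negbTE iA); lra.
    + by rewrite (negbTE iA); lra.
  rewrite sumrB -!mulr_suml -!mulr_sumr sumind -/D -/Q in H1.
  nra.
have GE : \sum_i ((b - a i)^+2 - (b - r i)^+2) =
   \sum_i ((b - a' i)^+2 - (b - r' i)^+2) + 2 * D * (b - p) + Q.
  rewrite (eq_bigr _ (fun i _ => T2 i)) !big_split /= -!mulr_suml -mulr_sumr.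
  by [].
rewrite LE GE.
have := mulr_ge0 D0 (_ : 0 <= k%:R * (b - p) - L'); rewrite subr_ge0 => /(_ M'p) H; move: C'; rewrite -/L' => C'; lra.
Qed.


Theorem lemma8 (R : realFieldType) (k n : nat) (l c : 'I_n -> R) :
  (0 < k)%N -> (0 < n)%N ->
  (forall i, 0 < l i) ->
  (forall x : R, #|[set i : 'I_n | seg_int (c i) (l i) x]| <= k)%N ->
  let L := \sum_(i < n) l i in
  let cc := (\sum_(i < n) l i * c i) / L in
  forall x : R, seg cc (L / k%:R) x ->
    conv (fun y : R => exists i : 'I_n, seg (c i) (l i) y) x.
Proof.
move=> k0 n0 hl hply L cc x hx C hC hS.
pose a i := c i - l i / 2.
pose r i := c i + l i / 2.
pose i0 := Ordinal n0.
have [jb _ jbmax] := @ex_max R _ predT r i0 isT.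
have [ja _ jamin] := @ex_min R _ predT a i0 isT.
set b := r jb. set am := a ja.
have har i : a i <= r i by rewrite /a /r; have := hl i; lra.
have hrb i : r i <= b by apply: jbmax.
have hab i : am <= a i by apply: jamin.
have hK : 0 < k%:R :> R by rewrite ltr0n.
have hL : 0 < L.
  rewrite /L (bigD1 i0) //=; have := hl i0; have : 0 <= \sum_(i < n | i != i0) l i.
    by apply: sumr_ge0 => i _; apply: ltW.
  lra.
have LE : \sum_i (r i - a i) = L by apply: eq_bigr => i _; rewrite /r /a; field.
set S := \sum_(i < n) l i * c i.
have ccE : S = cc * L by rewrite /cc mulrVK // unitfE; apply: lt0r_neq0.
have hcard (P : pred 'I_n) : (#|[set i | P i]| <= n)%N.
  by apply: leq_trans (max_card _) _; rewrite card_ord.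
have [_ C1] := @G R k n b k0 n a r (hcard _) har hrb
   (fun x => hply x).
have E1 : \sum_i ((b - a i)^+2 - (b - r i)^+2) = 2 * (b * L - S).
  rewrite /L /S mulr_sumr -sumrB mulr_sumr; apply: eq_bigr => i _.
  by rewrite /a /r; field.
rewrite LE E1 ccE in C1.
have har2 i : - r i <= - a i by rewrite lerN2.
have hrb2 i : - a i <= - am by rewrite lerN2.
have hply2 y : (#|[set i | ((- r i < y) && (y < - a i))%R]| <= k)%N.
  apply: leq_trans (hply (- y)); apply: subset_leq_card; apply/subsetP => i.
  rewrite !inE /seg_int -/(a i) -/(r i) => /andP [h1 h2].
  apply/andP; split; lra.
have [_ C2] := @G R k n (- am) k0 n (fun i => - r i) (fun i => - a i) (hcard _)
   har2 hrb2 hply2.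
have E2 : \sum_i ((- am - - r i)^+2 - (- am - - a i)^+2) = 2 * (S - am * L).
  rewrite /L /S mulr_sumr -sumrB mulr_sumr; apply: eq_bigr => i _.
  by rewrite /a /r; field.
have LE2 : \sum_i (- a i - - r i) = L by rewrite -LE; apply: eq_bigr => i _; ring.
rewrite LE2 E2 ccE in C2.
have H1 : L / k%:R <= 2 * (b - cc).
  rewrite ler_pdivrMr // -(ler_pM2l hL); move: C1; rewrite expr2; lra.
have H2 : L / k%:R <= 2 * (cc - am).
  rewrite ler_pdivrMr // -(ler_pM2l hL); move: C2; rewrite expr2; lra.
move: hx; rewrite /seg => /andP [hx1 hx2].
have xb : x <= b by lra.
have ax : am <= x by lra.
have amb : am < b.
  have h1 : a ja < r ja by rewrite /a /r; have := hl ja; lra.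
  have := hrb ja; rewrite /am; lra.
have Sam : C am.
  apply: hS; exists ja; rewrite /seg /am /a; apply/andP; split; have := hl ja; lra.
have Sb : C b.
  apply: hS; exists jb; rewrite /seg /b /r; apply/andP; split; have := hl jb; lra.
pose t := (b - x) / (b - am).
have hba : 0 < b - am by lra.
have t0 : 0 <= t by apply: divr_ge0; lra.
have t1 : t <= 1 by rewrite /t ler_pdivrMr // mul1r; lra.
have -> : x = t * am + (1 - t) * b.
  rewrite /t; field; apply: lt0r_neq0; lra.
exact: hC.
Qed.
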